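(* Let ${\mathsf K},{\mathsf N}$ be positive integers, ${\mathsf q}$ a prime power, and $t\in\{0,1,\ldots,{\mathsf K}\}$. For every file length ${\mathsf B}$ that is a multiple of $\binom{{\mathsf K}}{t}$, there exists an uncoded cache placement in which each user stores ${\mathsf M}{\mathsf B}$ symbols with ${\mathsf M}=\frac{{\mathsf N}t}{{\mathsf K}}$, together with, for every demand matrix $\mathbb{D}\in\mathbb{F}_{\mathsf q}^{{\mathsf K}\times{\mathsf N}}$, a delivery (encoding and decoding functions) under which every user $k$ correctly decodes its demanded function and the load is $$\mathsf R(\mathbb{D})=\frac{\binom{{\mathsf K}}{t+1}-\binom{{\mathsf K}-\mathrm{rank}_{\mathsf q}(\mathbb{D})}{t+1}}{\binom{{\mathsf K}}{t}}.$$ In particular the worst-case load of this scheme equals $\frac{\binom{{\mathsf K}}{t+1}-\binom{{\mathsf K}-\min\{{\mathsf K},{\mathsf N}\}}{t+1}}{\binom{{\mathsf K}}{t}}$, attained by demand matrices of rank $\min\{{\mathsf K},{\mathsf N}\}$.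
   Context: Shared-link cache-aided scalar linear function retrieval problem with parameters $({\mathsf K},{\mathsf N},{\mathsf M},{\mathsf q})$: a server holds ${\mathsf N}$ files $F_1,\ldots,F_{\mathsf N}$, each a vector of ${\mathsf B}$ independent uniformly distributed symbols of $\mathbb{F}_{\mathsf q}$, and is connected to ${\mathsf K}$ users by an error-free broadcast link. Placement phase: user $k$ stores $Z_k=\phi_k(F_1,\ldots,F_{\mathsf N})\in\mathbb{F}_{\mathsf q}^{{\mathsf B}{\mathsf M}}$, chosen without knowledge of demands. Delivery phase: user $k$ demands the row vector $\mathbf y_k=(y_{k,1},\ldots,y_{k,{\mathsf N}})\in\mathbb{F}_{\mathsf q}^{\mathsf N}$, i.e. wants $y_{k,1}F_1+\cdots+y_{k,{\mathsf N}}F_{\mathsf N}$; the demand matrix is $\mathbb{D}=[\mathbf y_1;\ldots;\mathbf y_{\mathsf K}]\in\mathbb{F}_{\mathsf q}^{{\mathsf K}\times{\mathsf N}}$. The server broadcasts $X=\psi(\mathbb{D},F_1,\ldots,F_{\mathsf N})\in\mathbb{F}_{\mathsf q}^{{\mathsf B}{\mathsf R}}$, and each user $k$ must compute $y_{k,1}F_1+\cdots+y_{k,{\mathsf N}}F_{\mathsf N}=\xi_k(\mathbb{D},Z_k,X)$ for all file realizations. ${\mathsf R}$ is the load (transmitted symbols divided by ${\mathsf B}$). A placement is uncoded if each $Z_k$ consists of a subset of the symbols of the files, copied directly. The worst-case load of a scheme is the maximum load over all demand matrices. $\binom{x}{y}=0$ if $x<y$ or $x<0$ or $y<0$. $\mathrm{rank}_{\mathsf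 q}$ denotes rank over $\mathbb{F}_{\mathsf q}$. *)

(* Defs.v *)
From HB Require Import structures.
From mathcomp Require Import all_boot all_order all_algebra.
Set Implicit Arguments. Unset Strict Implicit. Unset Printing Implicit Defensive.
Import GRing.Theory.

(* File library: W : 'M[F]_(N, B), row n is the file F_{n+1} (B symbols).
   A symbol position is a pair (file index, symbol index). *)

(* Uncoded cache content of a user storing the symbol positions in S:
   the values of the stored symbols (positions outside S are masked by 0;
   since S is fixed by the placement, this carries exactly the info Z_k). *)
Definition cache (F : finFieldType) (N B : nat) (S : {set 'I_N * 'I_B})
  (W : 'M[F]_(N, B)) : {ffun 'I_N * 'I_B -> F} :=
  [ffun p => if p \in S then W p.1 p.2 else 0%R].

Definition delivery (F : finFieldType) (K N B : nat)
  (S : 'I_K -> {set 'I_N * 'I_B}) (D : 'M[F]_(K, N)) (L : nat) : Prop :=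
  exists (enc : 'M[F]_(N, B) -> 'rV[F]_L)
         (dec : 'I_K -> {ffun 'I_N * 'I_B -> F} -> 'rV[F]_L -> 'rV[F]_B),
    forall (W : 'M[F]_(N, B)) (k : 'I_K),
      dec k (cache (S k) W) (enc W) = (row k D *m W)%R.

(* Main.v *)
Require Import Defs.
From HB Require Import structures.
From mathcomp Require Import all_boot all_order all_algebra.
From mathcomp Require Import ring zify.
Set Implicit Arguments. Unset Strict Implicit. Unset Printing Implicit Defensive.
Import GRing.Theory.

Section Key.
Variables (F : finFieldType) (K N m : nat) (D : 'M[F]_(K,N)).
Local Open Scope ring_scope.

Definition pos (k : 'I_K) (S : {set 'I_K}) : nat := #|[set i in S | (i < k)%N]|.
Definition sg (n : nat) : F := (-1) ^+ n.
Definition Xm (W : {set 'I_K} -> 'M[F]_(N,m)) (S : {set 'I_K}) : 'rV[F]_m :=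
  \sum_(k in S) sg (pos k S) *: (row k D *m W (S :\ k)).

Lemma sgD a b : sg (a + b) = sg a * sg b.
Proof. by rewrite /sg exprD. Qed.
Lemma sgK a : sg a * sg a = 1.
Proof. by rewrite -sgD addnn -mul2n /sg exprM expr2 mulrNN mulr1 expr1n. Qed.
Lemma sg1 : sg 1 = -1. Proof. by rewrite /sg expr1. Qed.

Lemma pos_setU1 (j : 'I_K) (P : {set 'I_K}) k : j \notin P -> pos k (j |: P) = (pos k P + (j < k))%N.
Proof.
move=> jP; rewrite /pos.
case: (ltnP j k) => jk.
  have -> : [set i in j |: P | (i < k)%N] = j |: [set i in P | (i < k)%N].
    by apply/setP => i; rewrite !inE; case: (eqVneq i j) => [->|] //=; rewrite jk.
  by rewrite cardsU1 inE (negPf jP) addnC.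
have -> : [set i in j |: P | (i < k)%N] = [set i in P | (i < k)%N].
  apply/setP => i; rewrite !inE; case: (eqVneq i j) => [->|] //=.
  by rewrite ltnNge jk (negPf jP).
by rewrite addn0.
Qed.

Lemma setU1D1 (j k : 'I_K) (P : {set 'I_K}) : j != k -> (j |: P) :\ k = j |: (P :\ k).
Proof.
move=> jk; apply/setP => i; rewrite !inE.
by case: (eqVneq i j) => [->|] //=; rewrite jk.
Qed.

Lemma Xm_U1 W (j : 'I_K) (P : {set 'I_K}) : j \notin P ->
  Xm W (j |: P) = sg (pos j P) *: (row j D *m W P) +
     \sum_(k in P) sg (pos k (j |: P)) *: (row k D *m W (j |: (P :\ k))).
Proof.
move=> jP; rewrite /Xm big_setU1 //= setU1K // pos_setU1 // ltnn addn0.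
congr (_ + _); apply: eq_bigr => k kP.
by rewrite setU1D1 //; apply: contraNneq jP => ->.
Qed.

Variables (n : nat) (hn : (n < K)%N) (cc : 'I_K -> F).
Hypothesis cc0 : forall i : 'I_K, ~~ (i < n)%N -> cc i = 0.
Hypothesis ccD : row (Ordinal hn) D = \sum_i cc i *: row i D.

Definition k0 := Ordinal hn.
Definition Wp (W : {set 'I_K} -> 'M[F]_(N,m)) (R : {set 'I_K}) : 'M[F]_(N,m) :=
  W (k0 |: R) + sg (#|R|.+1) *: \sum_(j | j \notin R) (sg (pos j R) * cc j) *: W (j |: R).

Lemma ident W (P : {set 'I_K}) : (forall i, i \in P -> (i < n)%N) ->
  Xm W (k0 |: P) = sg #|P| *: \sum_(j | j \notin P) (sg (pos j P) * cc j) *: Xm W (j |: P)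
                   + Xm (Wp W) P.
Proof.
move=> Pn.
have k0P : k0 \notin P by apply/negP => /Pn; rewrite ltnn.
rewrite Xm_U1 //.
have -> : pos k0 P = #|P|.
  rewrite /pos; apply: eq_card => i; rewrite !inE.
  by case iP: (i \in P) => //=; exact: Pn.
rewrite [Xm (Wp W) P]/Xm /Wp.
under [X in _ = _ + X]eq_bigr => k kP.
  have -> : (#|P :\ k|.+1 = #|P|)%N by rewrite [#|P|](cardsD1 k P) kP.
  rewrite mulmxDr scalerDr -scalemxAr scalerA.
over.
rewrite big_split /= [RHS]addrCA [LHS]addrC; congr (_ + _).
  apply: eq_bigr => k kP; rewrite pos_setU1 //.
  have kn := Pn k kP.
  have -> : (k0 < k)%N = false by rewrite ltnNge /= ltnW.
  by rewrite addn0.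

rewrite ccD mulmx_suml.
under [X in _ = _ + X]eq_bigr => i iP do rewrite mulrC -scalerA.
rewrite -scaler_sumr -scalerDr; congr (_ *: _).
set T := fun (k : 'I_K) (R : {set 'I_K}) => row k D *m W R.
have h1 : \sum_(j | j \notin P) (sg (pos j P) * cc j) *: Xm W (j |: P) =
   \sum_(j | j \notin P) cc j *: T j P +
   \sum_(j | j \notin P) \sum_(k in P) (sg (pos j P) * cc j * sg (pos k (j |: P))) *: T k (j |: (P :\ k)).
  rewrite -big_split /=; apply: eq_bigr => j jP.
  rewrite Xm_U1 // scalerDr scalerA mulrAC sgK mul1r scaler_sumr; congr (_ + _).
  by apply: eq_bigr => k kP; rewrite scalerA.
have h2 : \sum_(i in P) sg (pos i P) *: (row i D *m \sum_(j | j \notin P :\ i) (sg (pos j (P :\ i)) * cc j) *: W (j |: P :\ i))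
  = \sum_(i in P) cc i *: T i P +
    \sum_(i in P) \sum_(j | j \notin P) (sg (pos i P) * sg (pos j (P :\ i)) * cc j) *: T i (j |: (P :\ i)).
  rewrite -big_split /=; apply: eq_bigr => i iP.
  rewrite mulmx_sumr scaler_sumr (bigD1 i) /=; last by rewrite !inE eqxx.
  congr (_ + _).
    rewrite -scalemxAr scalerA setD1K // mulrA.
    have -> : pos i (P :\ i) = pos i P.
      by rewrite -{2}(setD1K iP) pos_setU1 ?setD11 // ltnn addn0.
    by rewrite sgK mul1r.
  apply: eq_big => [j|j _]; last by rewrite -scalemxAr scalerA mulrA.
  rewrite !inE; case: (eqVneq j i) => [->|ji] /=; first by rewrite iP.
  by rewrite andbT.
have h3 : \sum_(j | j \notin P) \sum_(k in P) (sg (pos j P) * cc j * sg (pos k (j |: P))) *: T k (j |: (P :\ k))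
   + \sum_(i in P) \sum_(j | j \notin P) (sg (pos i P) * sg (pos j (P :\ i)) * cc j) *: T i (j |: (P :\ i)) = 0.
  rewrite exchange_big -big_split /= big1 // => k kP.
  rewrite -big_split /= big1 // => j jP.
  rewrite -scalerDl.
  have jk : j != k by apply: contraNneq jP => ->.
  rewrite pos_setU1 // [pos j P](_ : _ = pos j (P :\ k) + (k < j))%N; last first.
    by rewrite -{1}(setD1K kP) pos_setU1 // setD11.
  have -> : (sg (pos j (P :\ k) + (k < j)) * cc j * sg (pos k P + (j < k)))
    = - (sg (pos k P) * sg (pos j (P :\ k)) * cc j).
    rewrite !sgD; have : ((k < j) + (j < k) = 1)%N.
      by case: (ltngtP k j) => // /val_inj/eqP; rewrite eq_sym (negPf jk).
    move=> e; have : sg (k < j) * sg (j < k) = -1 by rewrite -sgD e sg1.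
    move=> e2.
    transitivity ((sg (k < j) * sg (j < k)) * (sg (pos k P) * sg (pos j (P :\ k)) * cc j)).
      by rewrite !mulrA; ring.
    by rewrite e2 mulN1r.
  by rewrite addNr scale0r.
rewrite h1 (bigID (fun i => i \in P)) /=.
rewrite h2 addrACA h3 addr0 addrC.
by congr (_ + _); apply: eq_bigr => i _; rewrite /T scalemxAl.
Qed.
End Key.

Section Key2.
Variables (F : finFieldType) (K N m : nat) (D : 'M[F]_(K,N)).
Local Open Scope ring_scope.

Definition Dn n : 'M[F]_(K,N) := \matrix_(i,j) if (i < n)%N then D i j else 0.
Definition gg n r s := ('C(n,s) - 'C(n-r,s))%N.

Lemma rowDn n i : row i (Dn n) = if (i < n)%N then row i D else 0.
Proof. by apply/rowP => j; rewrite !mxE; case: ifP => //; rewrite mxE. Qed.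

Lemma rank_step n (hn : (n < K)%N) :
  \rank (Dn n.+1) = (\rank (Dn n) + ~~ (row (Ordinal hn) D <= Dn n)%MS)%N.
Proof.
set y := row (Ordinal hn) D.
have sub1 : (Dn n <= Dn n.+1)%MS.
  apply/row_subP => i; rewrite rowDn; case: ifP => h; last exact: sub0mx.
  by apply: (eq_row_sub i); rewrite rowDn ltnS ltnW.
have sub2 : (Dn n.+1 <= Dn n + y)%MS.
  apply/row_subP => i; rewrite rowDn; case: ifP => h; last exact: sub0mx.
  case: (ltngtP i n) => [lin|gt|ein].
  - have hh : (row i D <= Dn n)%MS by apply: (eq_row_sub i); rewrite rowDn lin.
    exact: submx_trans hh (addsmxSl _ _).
  - by move: h; rewrite ltnS leqNgt gt.
  have -> : i = Ordinal hn by apply: val_inj; rewrite /= ein.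
  exact: addsmxSr.
have sub3 : (y <= Dn n.+1)%MS.
  by apply: (eq_row_sub (Ordinal hn)); rewrite rowDn /= ltnSn.
case: (boolP (y <= Dn n)%MS) => h /=.
  rewrite addn0; apply/eqP; rewrite eqn_leq (mxrankS sub1) andbT; apply: mxrankS.
  by apply: submx_trans sub2 _; rewrite addsmx_sub submx_refl h.
have lt : (\rank (Dn n) < \rank (Dn n.+1))%N.
  rewrite (ltn_leqif (mxrank_leqif_sup sub1)); apply: contra h => h2.
  exact: submx_trans sub3 h2.
have le : (\rank (Dn n.+1) <= \rank (Dn n) + 1)%N.
  apply: leq_trans (mxrankS sub2) _.
  apply: leq_trans (leq_of_leqif (mxrank_adds_leqif _ _)) _.
  by rewrite leq_add2l rank_leq_row.
by apply/eqP; rewrite eqn_leq le addn1 lt.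
Qed.

Lemma Dn0 : Dn 0 = 0.
Proof. by apply/matrixP => i j; rewrite !mxE. Qed.

Lemma rank_le n : (n <= K)%N -> (\rank (Dn n) <= n)%N.
Proof.
elim: n => [|n IH] hn; first by rewrite Dn0 mxrank0.
rewrite (rank_step hn); have := IH (ltnW hn).
by case: (~~ _) => /=; rewrite ?addn1 ?addn0 // => /leqW.
Qed.


Lemma gg_dep n r s : (r <= n)%N -> (gg n r s.+1 + gg n r s = gg n.+1 r s.+1)%N.
Proof.
move=> rn; rewrite /gg subSn // binS binS.
have h1 := leq_bin2l s.+1 (leq_subr r n).
have h2 := leq_bin2l s (leq_subr r n).
lia.
Qed.

Lemma gg_ind n r s : (r <= n)%N -> (gg n r s.+1 + 'C(n, s) = gg n.+1 r.+1 s.+1)%N.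
Proof.
move=> rn; rewrite /gg subSS binS.
have h1 := leq_bin2l s.+1 (leq_subr r n).
lia.
Qed.

Definition Pre n : {set 'I_K} := [set i : 'I_K | (i < n)%N].

Lemma card_Pre n : (n <= K)%N -> #|Pre n| = n.
Proof.
move=> nK.
have -> : Pre n = [set widen_ord nK i | i : 'I_n].
  apply/setP => i; rewrite inE; apply/idP/imsetP => [lin|[j _ ->]]; last by rewrite /= ltn_ord.
  by exists (Ordinal lin) => //; apply: val_inj.
rewrite card_imset ?card_ord // => a b /(congr1 val) /= h; exact: val_inj.
Qed.

Lemma key n : (n <= K)%N -> forall s, exists L, L = gg n (\rank (Dn n)) s /\
  exists (E : ({set 'I_K} -> 'M[F]_(N,m)) -> 'M[F]_(L,m)) (R : {set 'I_K} -> 'rV[F]_L),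
  forall W (S : {set 'I_K}), #|S| = s -> (forall i : 'I_K, i \in S -> (i < n)%N) -> Xm D W S = R S *m E W.
Proof.
elim: n => [_|n IH hn] s.
  exists 0%N; split; first by rewrite /gg sub0n subnn.
  exists (fun _ => 0), (fun _ => 0) => W S _ HS.
  have -> : S = set0 by apply/setP => i; rewrite inE; apply/negP => /HS.
  by rewrite /Xm big_set0 mul0mx.
have hn' : (n <= K)%N := ltnW hn.
case: s => [|s].
  exists 0%N; split; first by rewrite /gg !bin0.
  exists (fun _ => 0), (fun _ => 0) => W S /cards0_eq -> _.
  by rewrite /Xm big_set0 mul0mx.
have rn := rank_le hn'.
set k0' := Ordinal hn.
have Hk0 : k0 hn = k0' by [].
case: (boolP (row k0' D <= Dn n)%MS) => hdep.
-
  have rk : \rank (Dn n.+1) = \rank (Dn n) by rewrite (rank_step hn) hdep addn0.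
  case/submxP: hdep => c hc.
  pose cc (i : 'I_K) := if (i < n)%N then c 0 i else 0.
  have cc0 : forall i : 'I_K, ~~ (i < n)%N -> cc i = 0.
    by move=> i /negPf h; rewrite /cc h.
  have ccD : row k0' D = \sum_i cc i *: row i D.
    rewrite hc mulmx_sum_row; apply: eq_bigr => i _; rewrite rowDn /cc.
    by case: ifP => _; rewrite ?scaler0 ?scale0r.
  have [L0 [eL0 [E0 [R0 H0]]]] := IH hn' s.+1.
  have [L1 [eL1 [E1 [R1 H1]]]] := IH hn' s.
  exists (L0 + L1)%N; split; first by rewrite eL0 eL1 rk gg_dep.
  exists (fun W => col_mx (E0 W) (E1 (Wp hn cc W))).
  exists (fun S : {set 'I_K} => if k0' \in S then
      row_mx (sg F #|S :\ k0'| *: \sum_(j | j \notin S :\ k0')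
                 (sg F (pos j (S :\ k0')) * cc j) *: R0 (j |: (S :\ k0')))
             (R1 (S :\ k0'))
    else row_mx (R0 S) 0).
  move=> W S hS hSn.
  case: ifP => k0S; rewrite mul_row_col; last first.
    rewrite mul0mx addr0; apply: H0 => // i iS.
    have := hSn i iS; rewrite ltnS leq_eqVlt => /orP[/eqP ein|] //.
    have ei : i = k0' by apply: val_inj; rewrite /= ein.
    by rewrite -ei iS in k0S.
  set P := S :\ k0'.
  have HP : forall i : 'I_K, i \in P -> (i < n)%N.
    move=> i; rewrite !inE => /andP[ik iS]; have := hSn i iS.
    rewrite ltnS leq_eqVlt => /orP[/eqP ein|] //.
    have ei : i = k0' by apply: val_inj; rewrite /= ein.
    by rewrite ei eqxx in ik.
  have cP : #|P| = s by move: hS; rewrite (cardsD1 k0') k0S add1n => -[].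
  have eS : S = k0' |: P by rewrite /P setD1K.
  rewrite -(H1 (Wp hn cc W) P cP HP) {1}eS.
  have := ident ccD W HP; rewrite Hk0 => ->; congr (_ + _).
  rewrite -scalemxAl mulmx_suml; congr (_ *: _); apply: eq_bigr => j jP.
  rewrite -scalemxAl; case: (ltnP j n) => jn; last first.
    by rewrite cc0 -?leqNgt // mulr0 !scale0r.
  rewrite (H0 W) // ?cardsU1 ?jP ?cP // => i /setU1P [-> //|iP].
  exact: HP.
- have rk : \rank (Dn n.+1) = (\rank (Dn n) + 1)%N by rewrite (rank_step hn) hdep.
  have [L0 [eL0 [E0 [R0 H0]]]] := IH hn' s.+1.
  set Pset := [set P : {set 'I_K} | P \subset Pre n & #|P| == s].
  have cPset : #|Pset| = 'C(n, s) by rewrite /Pset cards_draws card_Pre.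
  exists (L0 + #|Pset|)%N; split; first by rewrite eL0 cPset rk addn1 gg_ind.
  exists (fun W => col_mx (E0 W) (\matrix_(i < #|Pset|) Xm D W (k0' |: enum_val i))).
  exists (fun S : {set 'I_K} => if k0' \in S then
      row_mx 0 (\row_(i < #|Pset|) ((enum_val i == S :\ k0')%:R))
    else row_mx (R0 S) 0).
  move=> W S hS hSn.
  case: ifP => k0S; rewrite mul_row_col; last first.
    rewrite mul0mx addr0; apply: H0 => // i iS.
    have := hSn i iS; rewrite ltnS leq_eqVlt => /orP[/eqP ein|] //.
    have ei : i = k0' by apply: val_inj; rewrite /= ein.
    by rewrite -ei iS in k0S.
  set P := S :\ k0'.
  have HP : forall i : 'I_K, i \in P -> (i < n)%N.
    move=> i; rewrite !inE => /andP[ik iS]; have := hSn i iS.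
    rewrite ltnS leq_eqVlt => /orP[/eqP ein|] //.
    have ei : i = k0' by apply: val_inj; rewrite /= ein.
    by rewrite ei eqxx in ik.
  have cP : #|P| = s by move: hS; rewrite (cardsD1 k0') k0S add1n => -[].
  have eS : S = k0' |: P by rewrite /P setD1K.
  have PP : P \in Pset.
    rewrite inE cP eqxx andbT; apply/subsetP => i iP; rewrite inE; exact: HP.
  rewrite mul0mx add0r mulmx_sum_row (bigD1 (enum_rank_in PP P)) //= big1 ?addr0.
    by rewrite mxE (enum_rankK_in PP PP) eqxx scale1r rowK (enum_rankK_in PP PP) -eS.
  move=> i ii0; rewrite mxE.
  have -> : (enum_val i == P) = false.
    apply/negP => /eqP ei; have := enum_valK_in PP i; rewrite ei => h.
    by rewrite h eqxx in ii0.
  by rewrite scale0r.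
Qed.

End Key2.

Lemma DnK (F : finFieldType) K N (D : 'M[F]_(K,N)) : Dn D K = D.
Proof. by apply/matrixP => i j; rewrite mxE ltn_ord. Qed.

Section Main.
Variables (F : finFieldType) (K N t m B : nat).
Definition Tt := {T : {set 'I_K} | #|T| == t}.
Definition J := (Tt * 'I_m)%type.
Variable eB : #|{: J}| = B.
Local Open Scope ring_scope.

Definition fromB (b : 'I_B) : J := enum_val (cast_ord (esym eB) b).
Definition toB (x : J) : 'I_B := cast_ord eB (enum_rank x).
Lemma fromBK : cancel fromB toB.
Proof. by move=> b; rewrite /fromB /toB enum_valK cast_ordKV. Qed.
Lemma toBK : cancel toB fromB.
Proof. by move=> x; rewrite /fromB /toB cast_ordK enum_rankK. Qed.

Definition blk (b : 'I_B) : {set 'I_K} := val (fromB b).1.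
Definition Splace (k : 'I_K) : {set 'I_N * 'I_B} := [set p | k \in blk p.2].
Definition Wmat (W : 'M[F]_(N,B)) (T : {set 'I_K}) : 'M[F]_(N,m) :=
  \matrix_(n,i) if insub T is Some T' then W n (toB (T', i)) else 0.
Definition cmat (c : {ffun 'I_N * 'I_B -> F}) (T : {set 'I_K}) : 'M[F]_(N,m) :=
  \matrix_(n,i) if insub T is Some T' then c (n, toB (T', i)) else 0.

Lemma cmat_cache k W (T : {set 'I_K}) : k \in T -> cmat (cache (Splace k) W) T = Wmat W T.
Proof.
move=> kT; apply/matrixP => n i; rewrite !mxE.
case: insubP => [T' _ eT|//]; rewrite ffunE inE /blk toBK /= eT kT.
by [].
Qed.

Lemma rowWmat (D : 'M[F]_(K,N)) k W (x : J) :
  (row k D *m W) 0 (toB x) = (row k D *m Wmat W (val x.1)) 0 x.2.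
Proof.
rewrite !mxE; apply: eq_bigr => n _; rewrite !mxE valK.
by case: x.
Qed.

Definition dec (D : 'M[F]_(K,N)) L (R : {set 'I_K} -> 'rV[F]_L) (k : 'I_K)
  (c : {ffun 'I_N * 'I_B -> F}) (x : 'rV[F]_(L * m)) : 'rV[F]_B :=
  \row_b (let T := val (fromB b).1 in let i := (fromB b).2 in
    if k \in T then (row k D *m cmat c T) 0 i
    else sg F (pos k T) * ((R (k |: T) *m vec_mx x) 0 i -
       \sum_(j in T) sg F (pos j (k |: T)) * (row j D *m cmat c (k |: (T :\ j))) 0 i)).

Lemma decode (D : 'M[F]_(K,N)) L (E : ({set 'I_K} -> 'M[F]_(N,m)) -> 'M[F]_(L,m))
  (R : {set 'I_K} -> 'rV[F]_L) :
  (forall W (S : {set 'I_K}), #|S| = t.+1 -> Xm D W S = R S *m E W) ->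
  delivery Splace D (L * m).
Proof.
move=> H; exists (fun W => mxvec (E (Wmat W))), (dec D R) => W k.
apply/rowP => b; have [x ->] : exists x, b = toB x by exists (fromB b); rewrite fromBK.
rewrite rowWmat mxE toBK; case: x => T' i /=.
case: ifP => kT; first by rewrite cmat_cache.
have cT : #|val T'| = t by apply/eqP; exact: valP T'.
rewrite mxvecK -H; last by rewrite cardsU1 kT cT.
rewrite (Xm_U1 D (Wmat W) (negbT kT)) mxE summxE.
under [X in _ * (_ - X)]eq_bigr => j jT do rewrite cmat_cache ?setU11 //.
under [X in _ * (_ + X - _)]eq_bigr => j jT do rewrite mxE.
by rewrite addrK mxE mulrA sgK mul1r.
Qed.

Lemma card_Tsub (Q : pred {set 'I_K}) :
  #|[set T : Tt | Q (val T)]| = #|[set T : {set 'I_K} | (#|T| == t) && Q T]|.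
Proof.
rewrite -(card_imset _ val_inj); apply: eq_card => T; rewrite inE.
apply/imsetP/andP => [[T' + ->] | [hT hQ]].
  by rewrite inE => hQ; split => //; exact: (valP T').
by exists (@exist _ (fun T0 : {set 'I_K} => #|T0| == t) T hT); rewrite ?inE.
Qed.

Lemma card_Tt : #|{: Tt}| = 'C(K,t).
Proof.
rewrite card_sig -[K in 'C(K,t)]card_ord -card_draws; apply: eq_card => T.
by rewrite !inE.
Qed.

Lemma sub_setC1 (k : 'I_K) (T : {set 'I_K}) : (T \subset [set~ k]) = (k \notin T).
Proof.
apply/subsetP/negP => [h kT | h x xT].
  by have := h k kT; rewrite !inE eqxx.
by rewrite !inE; apply: contraTneq xT => ->; apply/negP.
Qed.

Lemma card_in (k : 'I_K) : (0 < K)%N ->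
  (#|[set T : Tt | k \in val T]| * K = t * 'C(K,t))%N.
Proof.
move=> K0.
have h1 := cardsC [set T : Tt | k \in val T].
have e2 : ~: [set T : Tt | k \in val T] = [set T : Tt | k \notin val T].
  by apply/setP => T; rewrite !inE.
rewrite e2 (card_Tsub (fun S => k \notin S)) card_Tt in h1.
have e3 : #|[set T : {set 'I_K} | (#|T| == t) && (k \notin T)]| = 'C(K.-1, t).
  rewrite -[in RHS](card_ord K) -(cardsC1 k) -cards_draws; apply: eq_card => T.
  by rewrite !inE sub_setC1 andbC.
rewrite e3 in h1.
move: (#|[set T : Tt | k \in val T]|) h1 => a.
have [K' ->] : exists K', K = K'.+1 by exists K.-1; rewrite prednK.
rewrite /=; case: t => [|t'].
  by rewrite !bin0 => /eqP; rewrite -{2}[1%N]add0n eqn_add2r => /eqP ->.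
rewrite binS => h.
have -> : a = 'C(K', t') by lia.
by rewrite mulnC (mul_bin_diag K'.+1 t').
Qed.

Lemma card_Splace (k : 'I_K) : (0 < K)%N -> (#|Splace k| * K = N * t * B)%N.
Proof.
move=> K0.
have -> : Splace k = setX [set: 'I_N] [set b | k \in blk b].
  by apply/setP => -[n b]; rewrite !inE.
rewrite cardsX cardsT card_ord.
have -> : [set b | k \in blk b] = toB @: [set x : J | k \in val x.1].
  apply/setP => b; rewrite inE; apply/idP/imsetP => [h | [x hx ->]].
    by exists (fromB b); rewrite ?inE ?fromBK.
  by rewrite /blk toBK; move: hx; rewrite inE.
rewrite card_imset; last exact: (can_inj toBK).
have -> : [set x : J | k \in val x.1] = setX [set T : Tt | k \in val T] [set: 'I_m].
  by apply/setP => -[T i]; rewrite !inE andbT.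
rewrite cardsX cardsT card_ord -eB card_prod card_Tt card_ord.
have h := card_in k K0.
by rewrite -mulnA mulnAC h -!mulnA.
Qed.

End Main.

Theorem theorem1 (F : finFieldType) (K N t B : nat) :
  0 < K -> 0 < N -> t <= K -> 'C(K, t) %| B ->
  exists S : 'I_K -> {set 'I_N * 'I_B},
    (* uncoded placement, each user stores M*B symbols with M = N t / K *)
    (forall k, #|S k| * K = N * t * B) /\
    exists Lf : 'M[F]_(K, N) -> nat,
      (forall D : 'M[F]_(K, N),
          delivery S D (Lf D) /\
          Lf D * 'C(K, t) = ('C(K, t.+1) - 'C(K - \rank D, t.+1)) * B) /\
      (\max_(D : 'M[F]_(K, N)) Lf D) * 'C(K, t)
        = ('C(K, t.+1) - 'C(K - minn K N, t.+1)) * B /\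
      (forall D : 'M[F]_(K, N), \rank D = minn K N ->
          Lf D = \max_(D' : 'M[F]_(K, N)) Lf D').
Proof.
move=> K0 N0 tK /dvdnP [m eB]; subst B.
have eJ : #|{: J K t m}| = (m * 'C(K,t))%N by rewrite card_prod card_Tt card_ord mulnC.
exists (Splace N eJ); split; first by move=> k; rewrite card_Splace.
exists (fun D : 'M[F]_(K,N) => (('C(K, t.+1) - 'C(K - \rank D, t.+1)) * m)%N).
have hmax : (\max_(D : 'M[F]_(K, N)) (('C(K, t.+1) - 'C(K - \rank D, t.+1)) * m))%N
     = (('C(K, t.+1) - 'C(K - minn K N, t.+1)) * m)%N.
  apply/eqP; rewrite eqn_leq; apply/andP; split.
    apply/bigmax_leqP => D _; rewrite leq_mul2r leq_sub2l ?orbT //.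
    by apply: leq_bin2l; apply: leq_sub2l; rewrite leq_min rank_leq_row rank_leq_col.
  apply: leq_trans (leq_bigmax (pid_mx (minn K N) : 'M[F]_(K,N))).
  by rewrite rank_pid_mx ?geq_minl ?geq_minr.
split; last split.
- move=> D; split; last by rewrite mulnA.
  have [L [eL [E [R H]]]] := key m D (leqnn K) t.+1.
  rewrite DnK in eL.
  have -> : (('C(K, t.+1) - 'C(K - \rank D, t.+1)) * m)%N = (L * m)%N by rewrite eL.
  apply: (decode eJ (E := E) (R := R)) => W S hS.
  by apply: H => // i _; exact: ltn_ord.
- by rewrite hmax mulnA.
- by move=> D hD; rewrite hmax hD.
Qed.
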